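(* The $\mathbb{F}$-dual of every $A$-code (of every length) is an $A$-code if and only if either $m=1$, or $m=2$ and $f(x)=x^2+ax-1$ for some $a\in\mathbb{F}$, or $m\ge2$ and $f(x)=x^m\pm1$.
   Context: Let $\mathbb{F}$ be a finite field, $f(x)\in\mathbb{F}[x]$ monic of degree $m$, $A=\mathbb{F}[x]/\langle f(x)\rangle$, elements identified with polynomials of degree $<m$. An $A$-code of length $l$ is an $A$-submodule of $A^l$. Identify $g(x)=\sum_{i=0}^{m-1}a_ix^i\in A$ with the vector $(a_0,\ldots,a_{m-1})\in\mathbb{F}^m$, and $(g_1,\ldots,g_l)\in A^l$ with the concatenation of the vectors of $g_1,\ldots,g_l$ in $\mathbb{F}^{lm}$. Under this identification an $A$-code $C$ is an $\mathbb{F}$-linear code of length $lm$, and its $\mathbb{F}$-dual $C^{\perp_{\mathbb{F}}}$ is its dual with respect to the standard dot product on $\mathbb{F}^{lm}$, viewed again as a subset of $A^l$; it is an $A$-code if it is an $A$-submodule of $A^l$. *)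

(* Defs.v *)
From HB Require Import structures.
From mathcomp Require Import all_boot all_order all_algebra.
Set Implicit Arguments. Unset Strict Implicit. Unset Printing Implicit Defensive.
Import GRing.Theory.
Local Open Scope ring_scope.

(* A = F[x]/<f>, m = deg f.  An element of A^l is encoded as an l x m matrix
   over F: row i holds the coefficient vector (a_0,...,a_{m-1}) of the i-th
   component g_i = sum_j a_j x^j.  Flattening row by row gives the vector in
   F^(l m) of the paper. *)

Section ACodes.
Variables (F : finFieldType) (m : nat) (f : {poly F}).

Definition poly_of_row (l : nat) (c : 'M[F]_(l, m)) (i : 'I_l) : {poly F} :=
  \sum_(j < m) c i j *: 'X^j.

Definition amul (l : nat) (g : {poly F}) (c : 'M[F]_(l, m)) : 'M[F]_(l, m) :=
  \matrix_(i < l, j < m) ((g * poly_of_row c i) %% f)`_j.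

(* C is an A-submodule of A^l, elements of A being the polynomials of
   degree < m *)
Definition is_Acode (l : nat) (C : {set 'M[F]_(l, m)}) : Prop :=
  [/\ 0 \in C,
      (forall c d, c \in C -> d \in C -> c + d \in C) &
      (forall (g : {poly F}) c, (size g <= m)%N -> c \in C -> amul g c \in C)].

Definition dotw (l : nat) (c d : 'M[F]_(l, m)) : F :=
  \sum_(i < l) \sum_(j < m) c i j * d i j.

Definition Fdual (l : nat) (C : {set 'M[F]_(l, m)}) : {set 'M[F]_(l, m)} :=
  [set d | [forall c in C, dotw c d == 0]].

End ACodes.

(* Main.v *)
Require Import Defs.
From HB Require Import structures.
From mathcomp Require Import all_boot all_order all_algebra.
From mathcomp Require Import ring zify.
Set Implicit Arguments. Unset Strict Implicit. Unset Printing Implicit Defensive.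
Import GRing.Theory.
Local Open Scope ring_scope.

Section Work.
Variables (F : finFieldType) (m : nat) (f : {poly F}).
Hypothesis hmonic : f \is monic.
Hypothesis hsize : size f = m.+1.
Hypothesis hm : (0 < m)%N.
Implicit Types (p q u v w g h : {poly F}).

Definition red (p : {poly F}) := p %% f.
Definition ip (u w : {poly F}) := \sum_(k < m) u`_k * w`_k.

Lemma f_neq0 : f != 0. Proof. by rewrite -size_poly_gt0 hsize. Qed.
Lemma size_red p : (size (red p) <= m)%N.
Proof. by rewrite -ltnS -hsize ltn_modp f_neq0. Qed.
Lemma red_small p : (size p <= m)%N -> red p = p.
Proof. by move=> hp; rewrite /red modp_small // hsize ltnS. Qed.
Lemma red_mulr g h : red (g * red h) = red (g * h).
Proof. by rewrite /red modp_mul. Qed.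
Lemma red_mull g h : red (red g * h) = red (g * h).
Proof. by rewrite mulrC red_mulr mulrC. Qed.
Lemma redD p q : red (p + q) = red p + red q. Proof. exact: modpD. Qed.
Lemma redZ a p : red (a *: p) = a *: red p. Proof. exact: modpZl. Qed.
Lemma red0 : red 0 = 0. Proof. exact: mod0p. Qed.

Lemma ipC u w : ip u w = ip w u.
Proof. by apply: eq_bigr => k _; rewrite mulrC. Qed.
Lemma ipDl u v w : ip (u + v) w = ip u w + ip v w.
Proof. rewrite /ip -big_split /=; apply: eq_bigr => k _; by rewrite coefD mulrDl. Qed.
Lemma ipDr u v w : ip w (u + v) = ip w u + ip w v.
Proof. by rewrite ipC ipDl !(ipC w). Qed.
Lemma ipZl a u w : ip (a *: u) w = a * ip u w.
Proof. rewrite /ip mulr_sumr; apply: eq_bigr => k _; by rewrite coefZ mulrA. Qed.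
Lemma ipZr a u w : ip w (a *: u) = a * ip w u.
Proof. by rewrite ipC ipZl ipC. Qed.
Lemma ip0l w : ip 0 w = 0.
Proof. by rewrite /ip big1 // => k _; rewrite coef0 mul0r. Qed.
Lemma ip0r w : ip w 0 = 0.
Proof. by rewrite ipC ip0l. Qed.
Lemma ipNl u w : ip (- u) w = - ip u w.
Proof. by rewrite -scaleN1r ipZl mulN1r. Qed.
Lemma ipNr u w : ip w (- u) = - ip w u.
Proof. by rewrite ipC ipNl ipC. Qed.
Lemma ipBl u v w : ip (u - v) w = ip u w - ip v w.
Proof. by rewrite ipDl ipNl. Qed.
Lemma ipBr u v w : ip w (u - v) = ip w u - ip w v.
Proof. by rewrite ipDr ipNr. Qed.
Lemma ip_Xl i u : (i < m)%N -> ip 'X^i u = u`_i.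
Proof.
move=> hi; rewrite /ip (bigD1 (Ordinal hi)) //= coefXn eqxx mul1r big1 ?addr0 //.
move=> j hj; rewrite coefXn; case: eqP => [e|]; last by rewrite mul0r.
by case/eqP: hj; apply: val_inj.
Qed.
Lemma ip_Xr i u : (i < m)%N -> ip u 'X^i = u`_i.
Proof. by move=> hi; rewrite ipC ip_Xl. Qed.

Definition Adj g g' := forall u w, (size u <= m)%N -> (size w <= m)%N ->
  ip u (red (g * w)) = ip (red (g' * u)) w.

Lemma Adj_mul g g' h h' : Adj g g' -> Adj h h' -> Adj (g * h) (h' * g').
Proof.
move=> Hg Hh u w su sw.
by rewrite -mulrA -red_mulr Hg ?size_red // Hh ?size_red // red_mulr mulrA.
Qed.
Lemma Adj_add g g' h h' : Adj g g' -> Adj h h' -> Adj (g + h) (g' + h').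
Proof.
move=> Hg Hh u w su sw.
by rewrite mulrDl redD ipDr Hg // Hh // -ipDl -redD -mulrDl.
Qed.
Lemma Adj_C c : Adj c%:P c%:P.
Proof.
move=> u w su sw; by rewrite !mul_polyC !redZ !red_small // ipZr ipZl.
Qed.
Lemma Adj_all q : Adj 'X q -> forall g, exists g', Adj g g'.
Proof.
move=> hq; elim/poly_ind => [|g c [g' Hg]].
  exists 0 => u w _ _; by rewrite !mul0r red0 ip0r ip0l.
exists (q * g' + c%:P); apply: Adj_add; [exact: Adj_mul | exact: Adj_C].
Qed.
Lemma Adj_red g g' : Adj g g' -> Adj g (red g').
Proof. by move=> H u w su sw; rewrite H // red_mull. Qed.

Lemma f_m : f`_m = 1.
Proof. by have := monicP hmonic; rewrite /lead_coef hsize. Qed.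
Lemma f_big k : (m < k)%N -> f`_k = 0.
Proof. by move=> hk; rewrite nth_default // hsize. Qed.

Lemma redX w : (size w <= m)%N -> red ('X * w) = w * 'X - w`_m.-1 *: f.
Proof.
move=> sw; rewrite /red.
have -> : 'X * w = (w`_m.-1)%:P * f + (w * 'X - w`_m.-1 *: f).
  by rewrite mul_polyC addrC subrK mulrC.
rewrite modp_addl_mul_small // hsize ltnS; apply/leq_sizeP => j hj.
rewrite coefB coefMX coefZ; case: (ltngtP j m) => [hlt|hj'|->]; first by rewrite ltnNge hj in hlt.
  have -> : j == 0%N = false by apply/negbTE; rewrite -lt0n (leq_ltn_trans _ hj').
  rewrite f_big // mulr0 subr0; apply: nth_default.
  by rewrite (leq_trans sw) // -ltnS prednK // (leq_ltn_trans _ hj').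
by rewrite f_m mulr1 -(prednK hm) /= subrr.
Qed.

Local Notation P := (@poly_of_row F m _).

Lemma coef_por l (c : 'M[F]_(l, m)) i (k : 'I_m) : (P c i)`_k = c i k.
Proof.
rewrite /poly_of_row coef_sum (bigD1 k) //= coefZ coefXn eqxx mulr1 big1 ?addr0 //.
move=> j hj; rewrite coefZ coefXn; case: eqP => [e|]; last by rewrite mulr0.
by case/eqP: hj; apply: val_inj.
Qed.
Lemma size_por l (c : 'M[F]_(l, m)) i : (size (P c i) <= m)%N.
Proof.
apply/leq_sizeP => j hj; rewrite /poly_of_row coef_sum big1 // => k _.
rewrite coefZ coefXn; case: eqP => [e|]; last by rewrite mulr0.
by move: (ltn_ord k); rewrite -e ltnNge hj.
Qed.
Lemma dotw_ip l (c d : 'M[F]_(l, m)) : dotw c d = \sum_i ip (P c i) (P d i).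
Proof. by apply: eq_bigr => i _; apply: eq_bigr => k _; rewrite !coef_por. Qed.

Definition mk l (p : 'I_l -> {poly F}) : 'M[F]_(l, m) := \matrix_(i, k) (p i)`_k.
Lemma por_mk l (p : 'I_l -> {poly F}) i : (size (p i) <= m)%N -> P (mk p) i = p i.
Proof.
move=> sp; apply/polyP => k; case: (ltnP k m) => hk.
  by have := coef_por (mk p) i (Ordinal hk); rewrite mxE.
by rewrite !nth_default ?(leq_trans (size_por _ i)) ?(leq_trans sp).
Qed.
Lemma por_amul l g (c : 'M[F]_(l, m)) i : P (amul f g c) i = red (g * P c i).
Proof. by rewrite (_ : amul f g c = mk (fun i => red (g * P c i))) // por_mk // size_red. Qed.
Lemma por0 l i : P (0 : 'M[F]_(l, m)) i = 0.
Proof. by rewrite /poly_of_row big1 // => j _; rewrite mxE scale0r. Qed.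
Lemma porD l (c d : 'M[F]_(l, m)) i : P (c + d) i = P c i + P d i.
Proof. by rewrite /poly_of_row -big_split; apply: eq_bigr => j _; rewrite mxE scalerDl. Qed.

Lemma poly_expand u : (size u <= m)%N -> u = \sum_(i < m) u`_i *: 'X^i.
Proof.
move=> su; have := @por_mk 1 (fun _ => u) ord0 su; rewrite /poly_of_row => {1}<-.
by apply: eq_bigr => i _; rewrite mxE.
Qed.

Lemma dual_code q (hq : Adj 'X q) l (C : {set 'M[F]_(l, m)}) :
  is_Acode f C -> is_Acode f (Fdual C).
Proof.
case=> C0 CD CA; split.
- rewrite inE; apply/forall_inP => c _; rewrite dotw_ip big1 // => i _.
  by rewrite por0 ip0r.
- move=> d e; rewrite !inE => /forall_inP Hd /forall_inP He; apply/forall_inP => c hc.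
  rewrite dotw_ip (eq_bigr (fun i => ip (P c i) (P d i) + ip (P c i) (P e i))).
    by rewrite big_split /= -!dotw_ip (eqP (Hd c hc)) (eqP (He c hc)) addr0.
  by move=> i _; rewrite porD ipDr.
- move=> g d sg; rewrite !inE => /forall_inP Hd; apply/forall_inP => c hc.
  have [g' Hg'] := Adj_all hq g.
  have H' := Adj_red Hg'.
  have cA := CA (red g') c (size_red _) hc.
  rewrite dotw_ip (eq_bigr (fun i => ip (P (amul f (red g') c) i) (P d i))).
    by rewrite -dotw_ip; apply: Hd.
  by move=> i _; rewrite !por_amul H' ?size_por.
Qed.

Lemma Adj_basis q :
  (forall i w, (i < m)%N -> (size w <= m)%N ->
     (red ('X * w))`_i = ip (red (q * 'X^i)) w) -> Adj 'X q.
Proof.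
move=> H u w su sw.
rewrite {2}(poly_expand su) mulr_sumr (big_morph red redD red0).
rewrite (big_morph (fun u => ip u w) (fun u v => ipDl u v w) (ip0l w)).
apply: eq_bigr => i _; rewrite -scalerAr redZ ipZl -H //.
Qed.

Lemma size_Xn_le i : (i < m)%N -> (size ('X^i : {poly F}) <= m)%N.
Proof. by rewrite size_polyXn. Qed.

Lemma Adj_m1 (hm1 : m = 1%N) : Adj 'X ((- f`_0) *: 'X^0).
Proof.
apply: Adj_basis => i w hi sw.
have i0 : i = 0%N by move: hi; rewrite hm1; case: i.
rewrite i0 redX // expr0 mulr1 red_small; last first.
  by rewrite (leq_trans (size_scale_leq _ _)) // size_poly1.
rewrite ipZl -(expr0 'X) ip_Xl // coefB coefMX coefZ hm1 /=.
by rewrite sub0r mulNr mulrC.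
Qed.

Lemma Adj_m2 (hm2 : m = 2%N) a (hf : f = 'X^2 + a *: 'X - 1) : Adj 'X 'X.
Proof.
have f0 : f`_0 = -1.
  by rewrite hf coefB coefD coefXn coefZ coefX coef1 /= mulr0 !add0r.
have f1 : f`_1 = a.
  by rewrite hf coefB coefD coefXn coefZ coefX coef1 /= mulr1 add0r subr0.
apply: Adj_basis => i w hi sw.
rewrite redX // coefB coefMX coefZ hm2 /=.
have hX : (size ('X : {poly F}) <= m)%N by rewrite size_polyX hm2.
move: hi; rewrite hm2; case: i => [|[|//]] _ /=.
  rewrite expr0 mulr1 red_small // -(expr1 'X) ip_Xl ?hm2 // f0.
  by rewrite sub0r mulrN1 opprK.
have -> : 'X * 'X^1 = f + (1 - a *: 'X) :> {poly F}.
  by rewrite hf expr1 -mul_polyC; ring.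
rewrite redD /red modpp add0r modp_small; last first.
  rewrite hsize hm2 ltnS (leq_trans (size_add _ _)) // geq_max size_poly1 /=.
  by rewrite size_opp (leq_trans (size_scale_leq _ _)) // size_polyX.
rewrite ipBl ipZl -(expr0 'X) ip_Xl ?hm2 // -(expr1 'X) ip_Xl ?hm2 // f1.
by rewrite mulrC.
Qed.

Lemma Adj_unit (e : F) (he : e * e = 1) (hf : f = 'X^m - e%:P) :
  Adj 'X (e *: 'X^(m.-1)).
Proof.
have fi i : (i < m)%N -> f`_i = - (if i == 0%N then e else 0).
  move=> hi; rewrite hf coefB coefXn coefC.
  by rewrite (ltn_eqF hi) sub0r.
apply: Adj_basis => i w hi sw.
rewrite redX // coefB coefMX coefZ fi //.
case: i hi => [|k] hk /=.
  rewrite expr0 mulr1 red_small; last first.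
    by rewrite (leq_trans (size_scale_leq _ _)) // size_polyXn prednK.
  by rewrite ipZl ip_Xl ?prednK // sub0r mulrN opprK mulrC.
rewrite oppr0 mulr0 subr0.
have -> : e *: 'X^(m.-1) * 'X^(k.+1) = e *: ('X^k * f + e *: 'X^k) :> {poly F}.
  have eX : 'X^(m.-1) * 'X^(k.+1) = 'X^k * 'X^m :> {poly F}.
    by rewrite -!exprD addnS -addSn prednK // addnC.
  rewrite hf -scalerAl eX; congr (_ *: _); rewrite -mul_polyC; ring.
rewrite redZ redD /red modp_mull add0r modp_small; last first.
  rewrite hsize ltnS (leq_trans (size_scale_leq _ _)) // size_polyXn.
  exact: ltnW.
by rewrite scalerA he scale1r ip_Xl // ltnW.
Qed.

Lemma sum2 (G : 'I_2 -> F) : \sum_(i < 2) G i = G ord0 + G ord_max.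
Proof. by rewrite big_ord_recl big_ord1; congr (_ + G _); apply: val_inj. Qed.

Section Forward.
Hypothesis hm2 : (2 <= m)%N.
Implicit Types c d : 'M[F]_(2, m).

Definition C2 : {set 'M[F]_(2, m)} :=
  [set c : 'M[F]_(2, m) | [forall k : 'I_m, c ord_max k == (red (P c ord0 * 'X))`_k]].

Lemma inC2 c : c \in C2 -> P c ord_max = red (P c ord0 * 'X).
Proof.
rewrite inE => /forallP H; apply/polyP => k; case: (ltnP k m) => hk.
  by have := H (Ordinal hk); rewrite -coef_por => /eqP.
by rewrite !nth_default ?(leq_trans (size_por _ _)) ?(leq_trans (size_red _)).
Qed.
Lemma inC2P c : P c ord_max = red (P c ord0 * 'X) -> c \in C2.
Proof. by move=> E; rewrite inE; apply/forallP => k; rewrite -coef_por E. Qed.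

Lemma C2_code : is_Acode f C2.
Proof.
split.
- by apply: inC2P; rewrite !por0 mul0r red0.
- move=> c d /inC2 hc /inC2 hd; apply: inC2P.
  by rewrite !porD hc hd mulrDl redD.
- move=> g c _ /inC2 hc; apply: inC2P.
  by rewrite !por_amul hc red_mulr red_mull mulrA.
Qed.

Lemma size_X_le : (size ('X : {poly F}) <= m)%N.
Proof. by rewrite size_polyX. Qed.

Lemma E_eq (H : forall l (C : {set 'M[F]_(l, m)}), is_Acode f C -> is_Acode f (Fdual C))
  (j : 'I_m) :
  - (f`_j * f`_0) + ((j : nat) == 0%N)%:R - ((j : nat) == m.-1)%:R * f`_1 = 0.
Proof.
have hm1 : (m.-1 < m)%N by rewrite prednK.
set D1 : {poly F} := f`_j *: 'X^(m.-1) - (if (0 < j)%N then 'X^(j.-1) else 0).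
set D2 : {poly F} := 'X^j.
have sD1 : (size D1 <= m)%N.
  apply/leq_sizeP => k hk; rewrite coefB coefZ coefXn.
  have -> : (k == m.-1) = false by apply/negbTE; rewrite neq_ltn (leq_trans hm1 hk) orbT.
  rewrite mulr0 sub0r; case: ifP => _; last by rewrite coef0 oppr0.
  rewrite coefXn; have -> : (k == j.-1) = false; last by rewrite oppr0.
  apply/negbTE; rewrite neq_ltn (leq_trans _ hk) ?orbT //.
  by rewrite (leq_ltn_trans (leq_pred j)).
have sD2 : (size D2 <= m)%N by rewrite size_polyXn.
set d := mk (fun i : 'I_2 => if i == ord0 then D1 else D2).
have Pd0 : P d ord0 = D1 by rewrite por_mk.
have Pd1 : P d ord_max = D2 by rewrite por_mk.
have hd : d \in Fdual C2.
  { rewrite inE; apply/forall_inP => c hc.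
  rewrite dotw_ip sum2 Pd0 Pd1 (inC2 hc) mulrC redX ?size_por //.
  set w := P c ord0.
  rewrite /D1 /D2; apply/eqP.
  rewrite ipBr ipZr ip_Xr // ipBl ipZl ip_Xr // coefMX.
  case: (posnP j) => [j0|jpos].
    by rewrite j0 /= ip0r subr0 sub0r ip_Xr // mulrC subrr.
  have hj1 : (j.-1 < m)%N by rewrite (leq_ltn_trans (leq_pred j)).
  rewrite ?jpos !ip_Xr //.
  ring. }
have [_ _ CA] := H 2%N C2 C2_code.
have had := CA 'X d size_X_le hd.
set c0 := mk (fun i : 'I_2 => if i == ord0 then 1 else 'X).
have s1 : (size (1%R : {poly F}) <= m)%N by rewrite size_poly1.
have Pc0 : P c0 ord0 = 1 by rewrite por_mk.
have Pc1 : P c0 ord_max = 'X by rewrite por_mk //= size_X_le.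
have hc0 : c0 \in C2.
  apply: inC2P; rewrite Pc0 Pc1 mul1r red_small //; exact: size_X_le.
move: had; rewrite inE => /forall_inP /(_ c0 hc0) /eqP.
rewrite dotw_ip sum2 Pc0 Pc1 !por_amul Pd0 Pd1 !redX //.
rewrite -(expr0 'X) ip_Xl // -(expr1 'X) ip_Xl //.
have D1m : D1`_(m.-1) = f`_j.
  rewrite /D1 coefB coefZ coefXn eqxx mulr1; case: ifP => hj; last by rewrite coef0 subr0.
  rewrite coefXn (_ : (m.-1 == j.-1) = false) ?subr0 //.
  by apply/negbTE; rewrite neq_ltn; apply/orP; right; move: (ltn_ord j) hj; lia.
rewrite expr1 D1m !coefB !coefMX !coefZ /= /D2 !coefXn => E.
apply: etrans E; rewrite [(0 == _)%N]eq_sym [(m.-1 == _)%N]eq_sym; ring.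
Qed.

Lemma shape
  (E : forall j : 'I_m, - (f`_j * f`_0) + ((j : nat) == 0%N)%:R - ((j : nat) == m.-1)%:R * f`_1 = 0) :
  [\/ m = 1%N,
      m = 2%N /\ (exists a : F, f = 'X^2 + a *: 'X - 1)
    | (2 <= m)%N /\ (f = 'X^m + 1 \/ f = 'X^m - 1)].
Proof.
have Ej j (hj : (j < m)%N) := E (Ordinal hj).
have f0sq : f`_0 * f`_0 = 1.
  have := Ej 0%N hm; rewrite /= (_ : (0 == m.-1)%N = false); last by apply/negbTE; lia.
  by rewrite mul0r subr0 addrC => /eqP; rewrite subr_eq0 => /eqP.
have f0n : f`_0 != 0 by apply/eqP => e; move: f0sq; rewrite e mul0r => /eqP; rewrite eq_sym oner_eq0.
have mid j : (0 < j)%N -> (j < m.-1)%N -> f`_j = 0.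
  move=> h1 h2; have hj : (j < m)%N by lia.
  have := Ej j hj; rewrite /= (_ : (j == 0)%N = false); last by apply/negbTE; lia.
  rewrite (_ : (j == m.-1)%N = false); last by apply/negbTE; lia.
  rewrite mul0r !subr0 addr0 => /eqP; rewrite oppr_eq0 mulf_eq0 (negbTE f0n) orbF.
  by move/eqP.
have hlast : - (f`_(m.-1) * f`_0) - f`_1 = 0.
  have := Ej m.-1 (ltac:(lia)); rewrite /= (_ : (m.-1 == 0)%N = false); last by apply/negbTE; lia.
  by rewrite eqxx mul1r addr0.
have third : (forall j, (0 < j)%N -> (j < m)%N -> f`_j = 0) ->
    [\/ m = 1%N, m = 2%N /\ (exists a : F, f = 'X^2 + a *: 'X - 1)
    | (2 <= m)%N /\ (f = 'X^m + 1 \/ f = 'X^m - 1)].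
  move=> Hz; have ef : f = 'X^m + (f`_0)%:P.
    apply/polyP => k; rewrite coefD coefXn coefC.
    case: (ltngtP k m) => hk.
    - rewrite add0r; case: (posnP k) => [->|kp] //=; by rewrite Hz.
    - rewrite f_big // add0r (_ : (k == 0)%N = false) //; apply/negbTE; lia.
    - rewrite hk f_m (_ : (m == 0)%N = false) ?addr0 //; apply/negbTE; lia.
  apply: Or33; split => //.
  have : (f`_0 - 1) * (f`_0 + 1) = 0 by rewrite mulrDr mulr1 mulrBl f0sq mul1r; ring.
  move/eqP; rewrite mulf_eq0 => /orP [/eqP h|/eqP h].
    by left; rewrite ef (_ : f`_0 = 1) ?polyC1 //; apply/eqP; rewrite -subr_eq0 h.
  right; rewrite ef (_ : f`_0 = -1) ?polyCN ?polyC1 //.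
  by apply/eqP; rewrite -subr_eq0 opprK h.
have [hm3|hm3] : (2 < m)%N \/ m = 2%N by lia.
- apply: third => j h1 h2.
  have f1 : f`_1 = 0 by apply: mid; lia.
  have [hj|hj] : (j < m.-1)%N \/ j = m.-1 by lia.
    exact: mid.
  move: hlast; rewrite f1 subr0 hj => /eqP; rewrite oppr_eq0 mulf_eq0 (negbTE f0n) orbF.
  by move/eqP.
- have [f10|f1n] := eqVneq (f`_1) 0.
    apply: third => j h1 h2; have -> : j = 1%N by lia. exact: f10.
  apply: Or32; split => //; exists (f`_1).
  have f0m : f`_0 = -1.
    move: hlast; rewrite hm3 /= => hl.
    have h0 : f`_1 * (f`_0 + 1) = - (- (f`_1 * f`_0) - f`_1) by ring.
    move: h0; rewrite hl oppr0 => /eqP; rewrite mulf_eq0 (negbTE f1n) /= addr_eq0.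
    by move/eqP.
  apply/polyP => k; rewrite coefB coefD coefXn coefZ coefX coef1.
  case: k => [|[|[|k]]] /=.
  + by rewrite f0m mulr0 !add0r.
  + by rewrite mulr1 add0r subr0.
  + by rewrite -hm3 f_m mulr0 addr0 subr0.
  + by rewrite mulr0 addr0 subr0 f_big //; lia.
Qed.
End Forward.

Lemma main_equiv :
  (forall (l : nat) (C : {set 'M[F]_(l, m)}),
      is_Acode f C -> is_Acode f (Fdual C))
  <->
  [\/ m = 1%N,
      m = 2%N /\ (exists a : F, f = 'X^2 + a *: 'X - 1)
    | (2 <= m)%N /\ (f = 'X^m + 1 \/ f = 'X^m - 1)].
Proof.
split.
  move=> H; have [hm1|hm1] : m = 1%N \/ (1 < m)%N by lia.
    by apply: Or31.
  exact: (shape hm1 (E_eq hm1 H)).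
move=> [hm1 | [hm2 [a ha]] | [hm2 [h|h]]] l C.
- exact: (dual_code (Adj_m1 hm1)).
- exact: (dual_code (Adj_m2 hm2 ha)).
- apply: (@dual_code (-1 *: 'X^(m.-1))); apply: Adj_unit; first by rewrite mulN1r opprK.
  by rewrite h polyCN opprK polyC1.
- apply: (@dual_code (1 *: 'X^(m.-1))); apply: Adj_unit; first by rewrite mulr1.
  by rewrite h polyC1.
Qed.
End Work.

Theorem mainTheorem13 (F : finFieldType) (m : nat) (f : {poly F})
  (hmonic : f \is monic) (hsize : size f = m.+1) (hm : (0 < m)%N) :
  (forall (l : nat) (C : {set 'M[F]_(l, m)}),
      is_Acode f C -> is_Acode f (Fdual C))
  <->
  [\/ m = 1%N,
      m = 2%N /\ (exists a : F, f = 'X^2 + a *: 'X - 1)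
    | (2 <= m)%N /\ (f = 'X^m + 1 \/ f = 'X^m - 1)].
Proof. exact: main_equiv. Qed.
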